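(* For every integer $n\ge 1$ and every real $x$, $$W^{(1)}_{n}(x)=(-2)^{\frac{n(n-1)}{2}}\,\sin^{\frac{n(n+1)}{2}}(x)\,G(n+1)\,2n\cos(x).$$
   Context: For smooth functions $f_1,\dots,f_n$ of a real variable $x$, $\mathrm{Wr}\{f_1,\dots,f_n\}$ denotes the determinant of the $n\times n$ matrix with $(i,j)$ entry $f_j^{(i-1)}(x)$. Define $W^{(1)}_1(x):=\sin(2x)$ and, for $n\ge2$, $W^{(1)}_n(x):=\mathrm{Wr}\{\sin(x),\sin(2x),\dots,\sin((n-1)x),\sin((n+1)x)\}$. Here $G(n+1)=\prod_{j=0}^{n-1}j!$. *)

(* Defs.v *)
From mathcomp Require Import all_boot all_order all_algebra.
From mathcomp Require Import all_classical all_reals all_analysis.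
Set Implicit Arguments. Unset Strict Implicit. Unset Printing Implicit Defensive.
Import Order.TTheory GRing.Theory Num.Theory.
Local Open Scope ring_scope.

Definition wronskian (R : realType) (n : nat) (f : 'I_n -> R -> R) (x : R) : R :=
  \det (\matrix_(i < n, j < n) derive1n i (f j) x).

Definition W1_freq (n : nat) (j : 'I_n) : nat :=
  if (j < n.-1)%N then j.+1 else n.+1.

Definition W1 (R : realType) (n : nat) (x : R) : R :=
  if n == 1%N then sin (2 * x)
  else wronskian (fun j : 'I_n => fun t : R => sin ((W1_freq j)%:R * t)) x.

Definition barnesG_succ (n : nat) : nat := (\prod_(j < n) j`!)%N.

(* Main.v *)
Require Import Defs.
From mathcomp Require Import all_boot all_order all_algebra.
From mathcomp Require Import all_classical all_reals all_analysis.
From mathcomp Require Import ring zify.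
Import Order.TTheory GRing.Theory Num.Theory.
Local Open Scope ring_scope.

Lemma d0_of (A : comPzRingType) (d : A -> A)
  (dD : forall x y, d (x + y) = d x + d y) : d 0 = 0.
Proof. by apply: (@addrI _ (d 0)); rewrite addr0 -dD addr0. Qed.

Lemma d_sum (A : comPzRingType) (d : A -> A)
  (dD : forall x y, d (x + y) = d x + d y) N (F : 'I_N -> A) :
  d (\sum_(l < N) F l) = \sum_(l < N) d (F l).
Proof. by apply: big_morph => //; apply: d0_of. Qed.

Fixpoint bseq (A : comPzRingType) (d : A -> A) (a e : A) (i l : nat) : A :=
  match i with
  | 0 => if l == 0%N then a else 0
  | i'.+1 => d (bseq A d a e i' l) + (if l is l'.+1 then bseq A d a e i' l' * e else 0)
  end.

Arguments bseq {A} d a e i l.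
Lemma tri_exp (A : comPzRingType) (d : A -> A)
  (dD : forall x y, d (x + y) = d x + d y)
  (dM : forall x y, d (x * y) = d x * y + x * d y) (a e : A) (N : nat) :
  forall i, (i < N.+1)%N ->
    [/\ bseq d a e i i = a * e ^+ i, (forall l, (i < l)%N -> bseq d a e i l = 0) &
    forall x : nat -> A, (forall l, d (x l) = x l.+1 * e) ->
      iter i d (a * x 0%N) = \sum_(l < N.+1) bseq d a e i l * x l].
Proof.
elim=> [_|i IH iN].
  split => //=.
    by rewrite expr0 mulr1.
    by case.
  move=> x _; rewrite big_ord_recl /= big1 ?addr0 // => l _.
  by rewrite mul0r.
have [bi bl bx] := IH (ltnW iN).
split.
- by rewrite /= bl // (@d0_of _ _ dD) add0r bi exprSr mulrA.
- move=> l il /=; rewrite bl ?(@d0_of _ _ dD) ?add0r; last exact: ltn_trans il.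
  by case: l il => // l il; rewrite bl ?mul0r.
move=> x dx; rewrite iterS bx // (@d_sum _ _ dD).
under eq_bigr do rewrite dM dx.
rewrite big_split /=.
under [X in _ = X]eq_bigr do rewrite mulrDl.
rewrite big_split /=; congr (_ + _).
rewrite big_ord_recr /= bl // mul0r addr0 big_ord_recl /= mul0r add0r.
by apply: eq_bigr => l _; rewrite /bump /=; ring.
Qed.

Arguments tri_exp {A d} dD dM a e {N i}.

Lemma det_tri (A : comPzRingType) n (b : 'I_n -> nat -> A) (X : 'I_n -> 'I_n -> A) :
  (forall (i : 'I_n) l, (i < l)%N -> b i l = 0) ->
  \det (\matrix_(i, j) \sum_(l < n) b i (nat_of_ord l) * X l j)
    = (\prod_(i < n) b i i) * \det (\matrix_(l, j) X l j).
Proof.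
move=> bz.
have -> : \matrix_(i, j) \sum_(l < n) b i (nat_of_ord l) * X l j
   = (\matrix_(i, l) b i (nat_of_ord l)) *m (\matrix_(l, j) X l j).
  by apply/matrixP => i j; rewrite !mxE; apply: eq_bigr => l _; rewrite !mxE.
rewrite det_mulmx det_trig; last by apply/is_trig_mxP => i j ij; rewrite mxE bz.
by congr (_ * _); apply: eq_bigr => i _; rewrite mxE.
Qed.

Section PP.
Variable R : comNzRingType.
Local Notation A := {poly {poly R}}.

Definition mpd (P : A) : A := map_poly (@deriv R) P.

Lemma mpdD (P Q : A) : mpd (P + Q) = mpd P + mpd Q.
Proof. by rewrite /mpd raddfD. Qed.

Lemma mpdM (P Q : A) : mpd (P * Q) = mpd P * Q + P * mpd Q.
Proof.
apply/polyP => i; rewrite /mpd coef_map /= coefM raddf_sum coefD !coefM.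
rewrite -big_split /=; apply: eq_bigr => j _.
by rewrite derivM !coef_map.
Qed.

Definition dlt (P : A) : A := 'X * mpd P - ('X%:P) * P^`().

Lemma dltD (P Q : A) : dlt (P + Q) = dlt P + dlt Q.
Proof. rewrite /dlt mpdD derivD; ring. Qed.

Lemma dltM (P Q : A) : dlt (P * Q) = dlt P * Q + P * dlt Q.
Proof. rewrite /dlt mpdM derivM; ring. Qed.

Definition phi (p : {poly R}) : A := map_poly polyC p.

Lemma mpd_phi p : mpd (phi p) = 0.
Proof.
apply/polyP => i; rewrite /mpd /phi coef_map /= coef_map /= derivC coef0.
by [].
Qed.

Lemma dlt_phi p : dlt (phi p) = phi (p^`()) * (- ('X%:P)).
Proof. by rewrite /dlt mpd_phi /phi deriv_map mulr0 sub0r mulrN mulrC. Qed.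

Lemma dlt_S : dlt (('X : {poly R})%:P) = 'X.
Proof.
rewrite /dlt derivC mulr0 subr0 /mpd map_polyC /= derivX mulr1.
by [].
Qed.

Lemma dlt_X : dlt 'X = - ('X%:P).
Proof.
rewrite /dlt derivX mulr1.
have -> : mpd 'X = 0.
  apply/polyP => i; rewrite /mpd coef_map /= coefX coef0.
  by case: (i == 1)%N; rewrite ?derivC ?derivC.
by rewrite mulr0 sub0r.
Qed.

Lemma dlt_const (c : {poly R}) : dlt (c%:P) = 'X * (c^`())%:P.
Proof. by rewrite /dlt derivC mulr0 subr0 /mpd map_polyC. Qed.

End PP.
Arguments dlt {R}. Arguments mpd {R}. Arguments phi {R}.

Section Cheb.
Variable R : comNzRingType.

Fixpoint chebU (k : nat) : {poly R} :=
  match k with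
  | 0 => 1
  | 1 => 'X *+ 2
  | (k'.+1 as k1).+1 => 'X * chebU k1 *+ 2 - chebU k'
  end.

Lemma chebUSS k : chebU k.+2 = 'X * chebU k.+1 *+ 2 - chebU k.
Proof. by []. Qed.

Lemma chebU_coef k : (forall i, (k < i)%N -> (chebU k)`_i = 0)
  /\ (chebU k)`_k = 2 ^+ k
  /\ (forall i, odd (k + i) -> (chebU k)`_i = 0).
Proof.
elim: k {-2}k (leqnn k) => [|N IH] k.
  rewrite leqn0 => /eqP ->; split; last split.
  - by move=> [|i] //= _; rewrite coef1.
  - by rewrite coef1 expr0.
  - by move=> [|i] //= _; rewrite coef1.
case: k => [|[|k]] kN.
- exact: IH.
- split; last split.
  + by move=> [|[|i]] //= _; rewrite coefMn coefX mul0rn.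
  + by rewrite coefMn coefX expr1.
  + by move=> [|[|i]] //=; rewrite coefMn coefX ?mul0rn.
have [h1 [h2 h3]] := IH k.+1 kN.
have [g1 [g2 g3]] := IH k (ltnW kN).
rewrite chebUSS; split; last split.
- move=> [|i] //= ki; rewrite coefB coefMn coefXM /= h1 // g1 ?mul0rn ?subr0 //.
  exact: ltn_trans (ltnW ki).
- rewrite coefB coefMn coefXM /=. rewrite h2. rewrite g1 //. rewrite subr0 !exprS. rewrite mulr2n; ring.
- have e1 j : odd (k.+2 + j) = odd (k + j) by rewrite !addSn /= negbK.
  have e2 j : odd (k.+2 + j.+1) = odd (k.+1 + j) by rewrite addnS /= negbK.
  move=> [|i] oi.
    rewrite coefB coefMn coefXM /= mul0rn sub0r g3 ?oppr0 //.
    by rewrite -e1.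
  rewrite coefB coefMn coefXM /= h3 ?g3 ?mul0rn ?subr0 //.
    by rewrite -e1.
  by rewrite -e2.
Qed.

End Cheb.

Section PolyW.
Variable R : comNzRingType.

Lemma exp_poly (q : {poly R}) N : (forall i, (N <= i)%N -> q`_i = 0) ->
  q = \sum_(i < N) q`_i *: 'X^i.
Proof.
move=> qz; rewrite -poly_def; apply/polyP => k; rewrite coef_poly.
by case: ltnP => // /qz ->.
Qed.

Definition ee {p : nat} (m : 'I_p.+2) : nat := if (m < p.+1)%N then nat_of_ord m else p.+2.

Lemma ee_lt p (j m : 'I_p.+2) : (j < m)%N -> (ee j < ee m)%N.
Proof.
rewrite /ee => jm; have mp := ltn_ord m.
case: ifP => jp; case: ifP => mp' //; exfalso; move: jp jm mp mp'; lia.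
Qed.

Lemma ee_max p : ee (@ord_max p.+1) = p.+2.
Proof. by rewrite /ee /= ltnn. Qed.

Lemma ee_widen p (m : 'I_p.+1) : ee (widen_ord (leqnSn p.+1) m) = m.
Proof. by rewrite /ee /= ltn_ord. Qed.

Lemma V_exp p (j : 'I_p.+2) :
  chebU R (ee j) = \sum_(m < p.+2) (chebU R (ee j))`_(ee m) *: 'X^(ee m).
Proof.
have [c1 [_ c3]] := chebU_coef R (ee j).
have z1 : (chebU R (ee j))`_p.+1 = 0.
  move: c1 c3; rewrite /ee; case: ifP => jp c1 c3.
    by apply: c1.
  apply: c3; have -> : (p.+2 + p.+1 = (p + p).+3)%N by lia.
  by rewrite /= !negbK addnn odd_double.
rewrite {1}(@exp_poly (chebU R (ee j)) p.+3); last first.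
  move: c1 c3; rewrite /ee; case: ifP => jp c1 c3 i pi; apply: c1; lia.
rewrite big_ord_recr /= big_ord_recr /= z1 scale0r addr0.
rewrite [RHS]big_ord_recr /= ee_max; congr (_ + _).
by apply: eq_bigr => m _; rewrite ee_widen.
Qed.

Lemma polyW p : \det (\matrix_(l < p.+2, j < p.+2) (chebU R (ee j))^`(l)) =
  (\prod_(m < p.+2) (2 ^+ ee m : R)%:P) *
  ((\prod_(m < p.+1) (m`!)%:R) * ('X *+ (p.+2)^_(p.+1))).
Proof.
have -> : \matrix_(l < p.+2, j < p.+2) (chebU R (ee j))^`(l) =
  (\matrix_(l < p.+2, m < p.+2) ('X^(ee m))^`(l)) *m
  (\matrix_(m < p.+2, j < p.+2) ((chebU R (ee j))`_(ee m))%:P).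
  apply/matrixP => l j; rewrite !mxE {1}(@V_exp p j) raddf_sum.
  apply: eq_bigr => m _; rewrite !mxE mulrC mul_polyC -derivnZ.
  by [].
rewrite det_mulmx mulrC; congr (_ * _).
  rewrite -det_tr det_trig; last first.
    apply/is_trig_mxP => i k ik; rewrite !mxE.
    have [c1 _] := chebU_coef R (ee i).
    by rewrite c1 // ee_lt.
  apply: eq_bigr => m _; rewrite !mxE.
  by have [_ [-> _]] := chebU_coef R (ee m).
rewrite -det_tr det_trig; last first.
  apply/is_trig_mxP => i k ik; rewrite !mxE derivnXn ffact_small ?mulr0n //.
  rewrite /ee; case: ifP => //; move: (ltn_ord k) (ltn_ord i) ik; lia.
rewrite big_ord_recr /=; congr (_ * _).
  apply: eq_bigr => m _; rewrite !mxE ee_widen derivnXn subnn expr0 ffactnn.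
  by [].
by rewrite !mxE ee_max derivnXn subSnn expr1.
Qed.

End PolyW.

Section DetM.
Variable R : comNzRingType.
Local Notation A := {poly {poly R}}.
Local Notation S := (('X : {poly R})%:P : A).

Lemma detM_eq p :
  \det (\matrix_(i < p.+2, j < p.+2) iter i dlt (S * phi (chebU R (ee j)))) =
  (\prod_(i < p.+2) (S * 1 ^+ i)) *
  ((\prod_(i < p.+2) (1 * (- S) ^+ i)) *
   phi (\det (\matrix_(l < p.+2, j < p.+2) (chebU R (ee j))^`(l)))).
Proof.
have dD := @dltD R; have dM := @dltM R.
have -> : \matrix_(i < p.+2, j < p.+2) iter i dlt (S * phi (chebU R (ee j))) =
  \matrix_(i < p.+2, j < p.+2) \sum_(l < p.+2)
     bseq dlt S 1 i (nat_of_ord l) * iter l dlt (phi (chebU R (ee j))).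
  apply/matrixP => i j; rewrite !mxE.
  have [_ _ h] := tri_exp dD dM S 1 (ltn_ord i).
  by apply: (h (fun l => iter l dlt (phi (chebU R (ee j))))) => l; rewrite mulr1.
move: (@det_tri _ _ (fun (i : 'I_p.+2) l => bseq dlt S 1 i l)
   (fun (l j : 'I_p.+2) => iter l dlt (phi (chebU R (ee j))))) => /= ->; last first.
  by move=> i l il; have [_ h _] := tri_exp dD dM S 1 (ltn_ord i); apply: h.
congr (_ * _).
  by apply: eq_bigr => i _; have [h _ _] := tri_exp dD dM S 1 (ltn_ord i).
have -> : \matrix_(i < p.+2, j < p.+2) iter i dlt (phi (chebU R (ee j))) =
  \matrix_(i < p.+2, j < p.+2) \sum_(l < p.+2)
     bseq dlt 1 (- S) i (nat_of_ord l) * phi ((chebU R (ee j))^`(l)).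
  apply/matrixP => i j; rewrite !mxE.
  have [_ _ h] := tri_exp dD dM 1 (- S) (ltn_ord i).
  rewrite -[phi (chebU R (ee j))]mul1r.
  apply: (h (fun l => phi ((chebU R (ee j))^`(l)))) => l.
  by rewrite dlt_phi derivnS.
move: (@det_tri _ _ (fun (i : 'I_p.+2) l => bseq dlt 1 (- S) i l)
   (fun (l j : 'I_p.+2) => phi ((chebU R (ee j))^`(l)))) => /= ->; last first.
  by move=> i l il; have [_ h _] := tri_exp dD dM 1 (- S) (ltn_ord i); apply: h.
congr (_ * _).
  by apply: eq_bigr => i _; have [h _ _] := tri_exp dD dM 1 (- S) (ltn_ord i).
rewrite /phi -det_map_mx; congr (\det _).
by apply/matrixP => i j; rewrite !mxE.
Qed.

End DetM.

Section Ev.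
Variable R : realType.
Local Notation A := {poly {poly R}}.

Definition ev (t : R) (P : A) : R := (map_poly (horner_eval (sin t)) P).[cos t].

Lemma evD t P Q : ev t (P + Q) = ev t P + ev t Q.
Proof. by rewrite /ev rmorphD hornerD. Qed.
Lemma evM t P Q : ev t (P * Q) = ev t P * ev t Q.
Proof. by rewrite /ev rmorphM hornerM. Qed.
Lemma evN t P : ev t (- P) = - ev t P.
Proof. by rewrite /ev rmorphN hornerN. Qed.
Lemma ev0 t : ev t 0 = 0.
Proof. by rewrite /ev rmorph0 horner0. Qed.
Lemma evX t : ev t 'X = cos t.
Proof. by rewrite /ev map_polyX hornerX. Qed.
Lemma evC t c : ev t c%:P = c.[sin t].
Proof. by rewrite /ev map_polyC hornerC. Qed.

Lemma ev1 t : ev t 1 = 1.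
Proof. by rewrite /ev rmorph1 -polyC1 hornerC. Qed.
Lemma evXn t P k : ev t (P ^+ k) = ev t P ^+ k.
Proof. by rewrite /ev rmorphXn horner_exp. Qed.
Lemma ev_prod t n (F : 'I_n -> A) : ev t (\prod_(i < n) F i) = \prod_(i < n) ev t (F i).
Proof. exact: (big_morph (ev t) (evM t) (ev1 t)). Qed.

Lemma ev_deriv (P : A) (t : R) : is_derive t (1 : R) (fun u => ev u P) (ev t (dlt P)).
Proof.
elim/poly_ind: P t => [|Q c IH] t.
  have -> : (fun u => ev u 0) = cst 0 by apply/funext => u; rewrite ev0.
  have -> : dlt (0 : A) = 0 by apply: (@d0_of _ _ (@dltD R)).
  by rewrite ev0; apply: is_derive_cst.
have -> : (fun u => ev u (Q * 'X + c%:P)) = (fun u => ev u Q) * cos + (horner c \o sin).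
  by apply/funext => u; rewrite evD evM evX evC.
apply: (is_derive_eq (is_deriveD (is_deriveM (IH t) (is_derive_cos t))
  (is_derive1_comp (is_derive_poly c (sin t)) (is_derive_sin t)))).
rewrite dltD dltM dlt_X dlt_const /dlt !evD !evM !evN !evX !evC hornerX.
rewrite !evD !evM !evN !evX !evC hornerX.
rewrite -[ev t Q *: _]/(ev t Q * _) -[cos t *: _]/(cos t * _).
rewrite (evM t ((('X : {poly R}))%:P)) evC hornerX; ring.
Qed.

Lemma ev_derive1n i P : derive1n i (fun u => ev u P) = fun u => ev u (iter i dlt P).
Proof.
elim: i => [|i IH]; first by rewrite derive1n0.
rewrite derive1nS IH; apply/funext => u; rewrite derive1E.
by have [_ ->] := ev_deriv (iter i dlt P) u.
Qed.

Lemma sin_cheb k (t : R) : sin ((k.+1)%:R * t) = sin t * (chebU R k).[cos t].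
Proof.
suff : (sin ((k.+1)%:R * t) = sin t * (chebU R k).[cos t]) /\ (sin ((k.+2)%:R * t) = sin t * (chebU R k.+1).[cos t]) by case.
elim: k => [|k [IH1 IH2]].
  split; first by rewrite /= mul1r hornerC mulr1.
  rewrite /= hornerMn hornerX -[2%:R]/(1 + 1 : R) mulrDl mul1r sinD; ring.
split => //.
rewrite chebUSS hornerD hornerN hornerMn hornerM hornerX.
have e1 : (k.+3)%:R * t = (k.+2)%:R * t + t.
  by rewrite -[k.+3]addn1 natrD mulrDl mul1r.
have e2 : (k.+1)%:R * t = (k.+2)%:R * t - t.
  by rewrite -[k.+2]addn1 natrD mulrDl mul1r addrK.
move: IH1; rewrite e2 sinB IH2 => h.
have h2 : cos ((k.+2)%:R * t) * sin t =
   sin t * (chebU R k.+1).[cos t] * cos t - sin t * (chebU R k).[cos t].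
  by rewrite -h; ring.
rewrite e1 sinD IH2 h2; rewrite -mulr_natl; ring.
Qed.

Lemma ev_phi t q : ev t (phi q) = q.[cos t].
Proof.
rewrite /ev /phi; congr (_.[_]).
by apply/polyP => i; rewrite !coef_map /= horner_evalE hornerC.
Qed.

Lemma W1_eq p (x : R) : W1 p.+2 x =
  ev x (\det (\matrix_(i < p.+2, j < p.+2) iter i dlt (('X : {poly R})%:P * phi (chebU R (ee j))))).
Proof.
rewrite /W1 /= /wronskian.
pose M := \matrix_(i < p.+2, j < p.+2) iter i dlt (('X : {poly R})%:P * phi (chebU R (ee j))).
have -> : \matrix_(i < p.+2, j < p.+2)
     derive1n i (fun t : R => sin ((W1_freq j)%:R * t)) x =
   map_mx (horner_eval (cos x)) (map_mx (map_poly (horner_eval (sin x))) M).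
  apply/matrixP => i j; rewrite !mxE.
  have -> : (fun t => sin ((W1_freq j)%:R * t)) =
      fun t => ev t (('X : {poly R})%:P * phi (chebU R (ee j))).
    apply/funext => t; rewrite evM evC hornerX ev_phi.
    by rewrite /W1_freq /ee /=; case: ifP => _; apply: sin_cheb.
  by rewrite ev_derive1n.
by rewrite !det_map_mx.
Qed.

End Ev.

Lemma sumord p : (\sum_(i < p) i)%N = 'C(p, 2).
Proof. by rewrite -bin2_sum big_mkord. Qed.

Theorem lemma1 (R : realType) (n : nat) (x : R) : (1 <= n)%N ->
  W1 n x = (-2) ^+ ((n * (n - 1)) %/ 2) * (sin x) ^+ ((n * (n + 1)) %/ 2)
           * (barnesG_succ n)%:R * (2 * n%:R) * cos x.
Proof.
case: n => [//|[|p]] _.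
  rewrite /W1 /= /barnesG_succ big_ord1 /=.
  have := @sin_cheb R 1 x; rewrite /= hornerMn hornerX => ->.
  rewrite (_ : (1 * (1 - 1)) %/ 2 = 0)%N // (_ : (1 * (1 + 1)) %/ 2 = 1)%N // expr0 expr1 mulr2n fact0; ring.
rewrite W1_eq detM_eq polyW.
under eq_bigr do rewrite expr1n mulr1.
rewrite evM ev_prod evM ev_prod ev_phi.
under eq_bigr do rewrite evC hornerX.
under [X in _ * (X * _)]eq_bigr do rewrite mul1r evXn evN evC hornerX.
rewrite prodrXr sumord prodr_const card_ord.
rewrite hornerM horner_prod.
under eq_bigr do rewrite hornerC.
rewrite prodrXr big_ord_recr /= ee_max.
under eq_bigr do rewrite ee_widen.
rewrite sumord hornerM horner_prod hornerMn hornerX.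
under eq_bigr do rewrite -polyC_natr hornerC.
have e1 : ((p.+2 * (p.+2 - 1)) %/ 2 = 'C(p.+2, 2))%N by rewrite bin2 divn2 subn1.
have e2 : ((p.+2 * (p.+2 + 1)) %/ 2 = 'C(p.+2, 2) + p.+2)%N.
  by rewrite addn1 divn2 mulnC -bin2 binS bin1.
have e3 : ('C(p.+2, 2) = 'C(p.+1, 2) + p.+1)%N by rewrite binS bin1.
have e4 : barnesG_succ p.+2 = (\prod_(i < p.+1) i`! * (p.+1)`!)%N.
  by rewrite /barnesG_succ big_ord_recr.
have e5 : (p.+2 ^_ p.+1 = p.+2 * (p.+1)`!)%N.
  by rewrite ffactSS -(ffact_fact (leqnSn p)) subSnn factS fact0 !muln1.
rewrite e1 e2 e4 e5 addnS -e3.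
set T := 'C(p.+2, 2).
rewrite -[cos x *+ _]mulr_natr (natrM _ p.+2 (p.+1)`!) (natrM _ (\prod_(i < p.+1) i`!) (p.+1)`!) natr_prod [2 ^+ _.+1]exprS (exprNn (sin x)) (exprNn 2) exprD.
set G := \prod_(i < p.+1) _.
set F := ((p.+1)`!)%:R.
clearbody F T G.
move: ((-1) ^+ T : R) (sin x ^+ T) (sin x ^+ p.+2) (2 ^+ T : R) ((p.+2)%:R : R) (cos x) => a b c d e f.
ring.
Qed.
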